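(* Let $\psi(x,z)$ be a trigonometric Darboux transform of $e^{xz}$, with $\psi=\frac1{f(z)}Pe^{xz}$ and $e^{xz}=\frac{1}{g(z)}Q\psi$, where $P,Q\in\mathbb{C}(e^x)[\partial]$. Write $$P=\frac{1}{\theta(e^x)}\overline P,\qquad Q=\overline Q\,\frac{1}{\nu(e^x)},$$ with $\overline P,\overline Q\in\mathbb{C}[e^x][\partial]$ and $\theta,\nu$ polynomials. Then $$\psi(x,z)=\frac{1}{\theta(e^x)}\frac{1}{f(z)}\,b(\overline P)e^{xz},\qquad e^{xz}=\frac{1}{\nu(e^x)}\,b(\overline Q)\frac{1}{g(z)}\psi(x,z),$$ where $b(\overline P)$ and $b(\overline Q)$ act in the variable $z$. Consequently $\psi$ satisfies the difference equation in $z$ $$f(z)^{-1}\,b(\overline P)\,b(\overline Q)\,g(z)^{-1}\psi(x,z)=\theta(e^x)\nu(e^x)\psi(x,z),$$ in addition to the differential equation $PQ\psi=f(z)g(z)\psi$ in $x$.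
   Context: Notation: $\partial=\frac{\partial}{\partial x}$. Darboux transform: $f,g$ are monic polynomials, $P,Q$ are monic differential operators, and $\mathrm{ord}\,P=\deg f$. It is trigonometric when the coefficients of $P$ and $Q$ are rational in $e^x$. Shift operator: $T$ acts on functions of $z$ by $Tf(z)=f(z+1)$. The map $b$: the anti-isomorphism $b:\mathbb{C}[e^x][\partial]\to\mathbb{C}[z][T]$ determined by $b(e^x)=T$ and $b(\partial)=z$; explicitly $b\big(\sum a_{ij}e^{ix}\partial^j\big)=\sum a_{ij}z^jT^i$. It satisfies $A e^{xz}=b(A)e^{xz}$ for every $A\in\mathbb{C}[e^x][\partial]$. *)

(* Defs.v *)
From HB Require Import structures.
From mathcomp Require Import all_boot all_order all_algebra.
Set Implicit Arguments. Unset Strict Implicit. Unset Printing Implicit Defensive.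
Import Order.TTheory GRing.Theory Num.Theory.
Local Open Scope ring_scope.
Local Open Scope quotient_scope.

(* Every function occurring in the statement has the form
        R(e^x, z) * e^{xz}       with R a rational function of (e^x, z).
   We represent such a function by its coefficient R, an element of
        Fn F := {fraction {poly {poly F}}}
   where, in {poly {poly F}}, the OUTER variable is X = e^x and the INNER
   variable is z.  The function e^{xz} itself is represented by 1.
   ------------------------------------------------------------------------ *)

Notation "x %:F" := (@FracField.tofrac _ x).

Section Encoding.
Variable F : numClosedFieldType.

Local Notation Pol := {poly {poly F}}.
Definition Fn := {fraction Pol}.

Definition fnum (r : Fn) : Pol := (frac (repr r)).1.
Definition fden (r : Fn) : Pol := (frac (repr r)).2.

(* the derivation X d/dX on Pol (X = e^x), i.e. d/dx on polynomials in e^x *)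
Definition dXpol (p : Pol) : Pol := 'X * p^`().
Definition shpol (p : Pol) : Pol := map_poly (fun c : {poly F} => c \Po ('X + 1)) p.

Definition dXfrac (r : Fn) : Fn :=
  ((dXpol (fnum r) * fden r - fnum r * dXpol (fden r))%:F) / ((fden r * fden r)%:F).
Definition shfrac (r : Fn) : Fn := (shpol (fnum r))%:F / (shpol (fden r))%:F.

Definition ex : Fn := ('X : Pol)%:F.
Definition zz : Fn := ((('X : {poly F})%:P) : Pol)%:F.
Definition polyEx (a : {poly F}) : Fn := (map_poly polyC a : Pol)%:F.
Definition polyZ  (a : {poly F}) : Fn := ((a%:P) : Pol)%:F.

(* d/dx acting on the function R e^{xz}:  d/dx (R e^{xz}) = (e^x R_X + z R) e^{xz} *)
Definition Dx (r : Fn) : Fn := dXfrac r + zz * r.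
(* T acting on the function R e^{xz}:  (T(R e^{xz}))(z) = e^x R(e^x,z+1) e^{xz} *)
Definition Tz (r : Fn) : Fn := ex * shfrac r.

(* Operators of C[e^x][d]: A = \sum_j a_j(e^x) d^j is encoded as A : Pol whose
   outer variable is d and whose j-th coefficient a_j : {poly F} is a
   polynomial in e^x.  Its action on functions: *)
Definition opx (A : Pol) (r : Fn) : Fn :=
  \sum_(j < size A) polyEx A`_j * iter j Dx r.

(* Operators of C[z][T]: B = \sum_i b_i(z) T^i is encoded as B : Pol whose
   outer variable is T and whose i-th coefficient b_i : {poly F} is a
   polynomial in z.  Its action on functions: *)
Definition opz (B : Pol) (r : Fn) : Fn :=
  \sum_(i < size B) polyZ B`_i * iter i Tz r.

(* The anti-isomorphism b : C[e^x][d] -> C[z][T],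
   b (\sum a_ij e^{ix} d^j) = \sum a_ij z^j T^i.
   Here A`_j`_i = a_ij. *)
Definition bmap (A : Pol) : Pol :=
  \sum_(j < size A) \sum_(i < size A`_j) ((A`_j`_i *: ('X : {poly F})^+ j)%:P * 'X^i).

Definition opP (theta : {poly F}) (Pbar : {poly {poly F}}) (r : Fn) : Fn :=
  (polyEx theta)^-1 * opx Pbar r.
Definition opQ (Qbar : {poly {poly F}}) (nu : {poly F}) (r : Fn) : Fn :=
  opx Qbar ((polyEx nu)^-1 * r).
End Encoding.

(* Main.v *)
Require Import Defs.
From Stdlib Require Import Lia.
From HB Require Import structures.
From mathcomp Require Import all_boot all_order all_algebra.
Import Order.TTheory GRing.Theory Num.Theory.
Local Open Scope ring_scope.
Local Open Scope quotient_scope.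
Set Implicit Arguments. Unset Strict Implicit.
Ltac slia := unfold addn, addn_rec, subn, subn_rec, muln, muln_rec, maxn in *; lia.
Ltac tolia := repeat match goal with H : is_true (ssrnat.leq _ _) |- _ => apply (elimT ssrnat.leP) in H end;
  try apply/ssrnat.leP; slia.

Section A.
Variable F : numClosedFieldType.
Local Notation Pol := {poly {poly F}}.

Definition shz (c : {poly F}) : {poly F} := c \Po ('X + 1).
Fact shz_zmod : zmod_morphism shz.
Proof. by move=> p q; rewrite /shz comp_polyB. Qed.
HB.instance Definition _ := GRing.isZmodMorphism.Build _ _ shz shz_zmod.
Fact shz_monoid : monoid_morphism shz.
Proof. by split=> [|p q]; rewrite /shz ?comp_polyC ?comp_polyM. Qed.
HB.instance Definition _ := GRing.isMonoidMorphism.Build _ _ shz shz_monoid.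

Lemma shpolE (p : Pol) : shpol p = map_poly shz p.
Proof. by []. Qed.

Lemma shpolD (p q : Pol) : shpol (p + q) = shpol p + shpol q.
Proof. by rewrite !shpolE rmorphD. Qed.
Lemma shpolB (p q : Pol) : shpol (p - q) = shpol p - shpol q.
Proof. by rewrite !shpolE rmorphB. Qed.
Lemma shpolM (p q : Pol) : shpol (p * q) = shpol p * shpol q.
Proof. by rewrite !shpolE rmorphM. Qed.
Lemma shpol1 : shpol (1 : Pol) = 1.
Proof. by rewrite !shpolE rmorph1. Qed.
Lemma shpolX : shpol ('X : Pol) = 'X.
Proof. by rewrite shpolE map_polyX. Qed.
Lemma shpolC (c : {poly F}) : shpol c%:P = (shz c)%:P.
Proof. by rewrite shpolE map_polyC. Qed.
Lemma shz_inj : injective shz.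
Proof.
move=> p q H; rewrite -(comp_polyXaddC_K p 1) -(comp_polyXaddC_K q 1).
by rewrite polyC1; move: H; rewrite /shz => ->.
Qed.
Lemma shpol_eq0 (p : Pol) : (shpol p == 0) = (p == 0).
Proof.
rewrite shpolE; apply/eqP/eqP => [H|->]; last by rewrite rmorph0.
by apply: (map_inj_poly shz_inj (rmorph0 _)); rewrite H rmorph0.
Qed.

Lemma dXpolD (p q : Pol) : dXpol (p + q) = dXpol p + dXpol q.
Proof. by rewrite /dXpol derivD mulrDr. Qed.
Lemma dXpolB (p q : Pol) : dXpol (p - q) = dXpol p - dXpol q.
Proof. by rewrite /dXpol derivB mulrBr. Qed.
Lemma dXpolM (p q : Pol) : dXpol (p * q) = dXpol p * q + p * dXpol q.
Proof. by rewrite /dXpol derivM mulrDr mulrA mulrCA. Qed.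
Lemma dXpolC (c : {poly F}) : dXpol c%:P = 0.
Proof. by rewrite /dXpol derivC mulr0. Qed.
Lemma dXpolX : dXpol ('X : Pol) = 'X.
Proof. by rewrite /dXpol derivX mulr1. Qed.
Lemma dXpol_sh (p : Pol) : dXpol (shpol p) = shpol (dXpol p).
Proof. rewrite /dXpol !shpolE deriv_map rmorphM /=; congr (_ * _); exact: (esym (map_polyX shz)).
Qed.

Definition SY (p : Pol) := sizeY p.

Lemma SY_mul (p q : Pol) : p != 0 -> q != 0 -> SY (p * q) = (SY p + SY q).-1.
Proof.
move=> p0 q0; rewrite /SY !sizeYE rmorphM size_mul //; by rewrite swapXY_eq0.
Qed.
Lemma SY_mul_leq (p q : Pol) : (SY (p * q) <= (SY p + SY q).-1)%N.
Proof. rewrite /SY !sizeYE rmorphM; exact: size_mul_leq. Qed.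
Lemma SY_add (p q : Pol) : (SY (p + q) <= maxn (SY p) (SY q))%N.
Proof. rewrite /SY !sizeYE rmorphD; exact: size_add. Qed.
Lemma SY_addl (p q : Pol) : (SY q < SY p)%N -> SY (p + q) = SY p.
Proof. rewrite /SY !sizeYE rmorphD; exact: size_addl. Qed.
Lemma SY_opp (p : Pol) : SY (- p) = SY p.
Proof. by rewrite /SY !sizeYE rmorphN size_opp. Qed.
Lemma SY_eq0 (p : Pol) : (SY p == 0%N) = (p == 0).
Proof. exact: sizeY_eq0. Qed.
Lemma SY_dX (p : Pol) : (SY (dXpol p) <= SY p)%N.
Proof.
rewrite /SY /sizeY; apply/bigmax_leqP => i _.
rewrite /dXpol coefXM; case: ifP => _; first by rewrite size_poly0.
rewrite coef_deriv -scaler_nat; apply: leq_trans (size_scale_leq _ _) _.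
exact: max_size_coefXY.
Qed.
Lemma SY_C (c : {poly F}) : SY c%:P = size c.
Proof.
rewrite /SY /sizeY size_polyC; case: eqP => [->|_]; first by rewrite big_ord0 size_poly0.
by rewrite big_ord1 coefC.
Qed.
Lemma SY_mapC (a : {poly F}) : a != 0 -> SY (map_poly polyC a) = 1%N.
Proof.
move=> a0; rewrite /SY sizeYE swapXY_map_polyC size_polyC a0 //.
Qed.

Lemma quot_aux (R : comRingType) (a b n d da db dn dd : R) :
  a * d = n * b -> da * d + a * dd = dn * b + n * db ->
  (dn * d - n * dd) * (b * b) = (da * b - a * db) * (d * d).
Proof.
move=> H H'.
have e1 : da * d = dn * b + n * db - a * dd by rewrite -H' addrK.
have e2 : a * db * (d * d) = n * b * (db * d) by rewrite mulrACA H.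
have e3 : a * dd * (b * d) = n * b * (dd * b) by rewrite [b * d]mulrC mulrACA H.
have e4 : n * db * (b * d) = n * b * (db * d) by rewrite mulrACA.
rewrite [RHS]mulrBl e2 mulrACA e1 !mulrBl mulrDl e3 e4 addrAC addrK.
congr (_ - _).
  by rewrite mulrACA [d * b]mulrC.
by rewrite mulrACA [dd * b]mulrC.
Qed.

Lemma div_cross (K : fieldType) (x y b d : K) :
  b != 0 -> d != 0 -> x * d = y * b -> x / b = y / d.
Proof.
move=> b0 d0 H; apply: (mulIf (mulf_neq0 b0 d0)).
rewrite [b * d]mulrC !mulrA mulfVK // mulrAC mulfVK //.
Qed.

Lemma div_cross' (K : fieldType) (x y b d : K) :
  b != 0 -> d != 0 -> x / b = y / d -> x * d = y * b.
Proof.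
move=> b0 d0 H.
by rewrite -(mulfVK b0 x) H mulrAC mulfVK.
Qed.

Lemma fden_neq0 (r : Fn F) : fden r != 0.
Proof. rewrite /fden; exact: denom_ratioP. Qed.

Lemma fracE (r : Fn F) : r = (fnum r)%:F / (fden r)%:F.
Proof.
apply: (@mulIf _ (fden r)%:F); first by rewrite tofrac_eq0 fden_neq0.
rewrite mulfVK ?tofrac_eq0 ?fden_neq0 //.
rewrite /fnum /fden -{1}[r]reprK.
move: (repr r) => x.
unlock FracField.tofrac.
rewrite [LHS](_ : _ = \pi_(Fn F) (FracField.mulf x (Ratio \d_x 1))); last first.
  exact: (esym (FracField.pi_mul _ _)).
apply/eqmodP => /=; rewrite FracField.equivfE /FracField.mulf /=.
rewrite !numden_Ratio ?mulr1 ?mul1r ?oner_neq0 ?denom_ratioP //.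
by rewrite mulrC eqxx.
Qed.

Lemma frac_cross (a b : Pol) (r : Fn F) : b != 0 -> r = a%:F / b%:F ->
  a * fden r = fnum r * b.
Proof.
move=> b0 H; apply/eqP; rewrite -tofrac_eq !tofracM; apply/eqP.
apply: div_cross'; rewrite ?tofrac_eq0 ?fden_neq0 //.
by rewrite -H -fracE.
Qed.

Lemma frac_eq (x y b d : Pol) : b != 0 -> d != 0 -> x * d = y * b ->
  x%:F / b%:F = y%:F / d%:F :> Fn F.
Proof.
move=> b0 d0 H; apply: div_cross; rewrite ?tofrac_eq0 // -!tofracM H //.
Qed.

Lemma dXfrac_frac (a b : Pol) : b != 0 ->
  dXfrac (a%:F / b%:F) = (dXpol a * b - a * dXpol b)%:F / (b * b)%:F.
Proof.
move=> b0; rewrite /dXfrac.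
set r := a%:F / b%:F.
have H := @frac_cross a b r b0 (erefl r).
apply: frac_eq; rewrite ?mulf_neq0 ?fden_neq0 //.
apply: quot_aux => //.
by rewrite -!dXpolM H.
Qed.

Lemma shfrac_frac (a b : Pol) : b != 0 ->
  shfrac (a%:F / b%:F) = (shpol a)%:F / (shpol b)%:F.
Proof.
move=> b0; rewrite /shfrac.
set r := a%:F / b%:F.
have H := @frac_cross a b r b0 (erefl r).
apply: frac_eq; rewrite ?shpol_eq0 ?fden_neq0 //.
by rewrite -!shpolM H.
Qed.


Lemma dXpol1 : dXpol (1 : Pol) = 0.
Proof. by rewrite -polyC1 dXpolC. Qed.

Lemma frac1 (p : Pol) : p%:F = p%:F / 1%:F :> Fn F.
Proof. by rewrite tofrac1 divr1. Qed.

Lemma dX_tofrac (p : Pol) : dXfrac (p%:F) = (dXpol p)%:F.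
Proof.
rewrite frac1 dXfrac_frac ?oner_neq0 // dXpol1 mulr0 subr0 !mulr1.
by rewrite tofrac1 divr1.
Qed.

Lemma sh_tofrac (p : Pol) : shfrac (p%:F) = (shpol p)%:F.
Proof.
by rewrite frac1 shfrac_frac ?oner_neq0 // shpol1 tofrac1 divr1.
Qed.

Lemma dXfrac_E (a b : Pol) (r : Fn F) : b != 0 -> r = a%:F / b%:F ->
  dXfrac r = ((dXpol a)%:F - r * (dXpol b)%:F) / b%:F.
Proof.
move=> b0 ->; rewrite dXfrac_frac //.
move: (dXpol a) (dXpol b) => da db.
rewrite tofracB !tofracM invfM mulrA.
have B0 : b%:F != 0 :> Fn F by rewrite tofrac_eq0.
congr (_ / _); rewrite mulrBl mulfK //.
by rewrite mulrAC.
Qed.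

Lemma common (r s : Fn F) : exists a1 a2 b : Pol,
  [/\ b != 0, r = a1%:F / b%:F & s = a2%:F / b%:F].
Proof.
exists (fnum r * fden s), (fnum s * fden r), (fden r * fden s).
split; first by rewrite mulf_neq0 ?fden_neq0.
  rewrite {1}[r]fracE; apply: frac_eq; rewrite ?mulf_neq0 ?fden_neq0 //.
  by rewrite mulrA mulrAC.
rewrite {1}[s]fracE; apply: frac_eq; rewrite ?mulf_neq0 ?fden_neq0 //.
by rewrite mulrA.
Qed.

Lemma dXfracD (r s : Fn F) : dXfrac (r + s) = dXfrac r + dXfrac s.
Proof.
have [a1 [a2 [b [b0 Hr Hs]]]] := common r s.
have Hrs : r + s = (a1 + a2)%:F / b%:F by rewrite Hr Hs -mulrDl tofracD.
rewrite (dXfrac_E b0 Hrs) (dXfrac_E b0 Hr) (dXfrac_E b0 Hs).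
rewrite -mulrDl dXpolD tofracD; congr (_ / _).
by rewrite mulrDl opprD addrACA.
Qed.

Lemma shfracD (r s : Fn F) : shfrac (r + s) = shfrac r + shfrac s.
Proof.
have [a1 [a2 [b [b0 Hr Hs]]]] := common r s.
have Hrs : r + s = (a1 + a2)%:F / b%:F by rewrite Hr Hs -mulrDl tofracD.
by rewrite Hrs Hr Hs !shfrac_frac // shpolD tofracD mulrDl.
Qed.

Lemma shfracM (r s : Fn F) : shfrac (r * s) = shfrac r * shfrac s.
Proof.
rewrite [r]fracE [s]fracE mulf_div -!tofracM !shfrac_frac ?mulf_neq0 ?fden_neq0 //.
by rewrite mulf_div -!tofracM !shpolM.
Qed.

Lemma leib_aux (K : fieldType) (r s B E DA DB DC DE : K) : B != 0 -> E != 0 ->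
  ((DA * (s * E) + (r * B) * DC) - r * s * (DB * E + B * DE)) / (B * E)
  = (DA - r * DB) / B * s + r * ((DC - s * DE) / E).
Proof.
move=> B0 E0.
have -> : DA * (s * E) + r * B * DC - r * s * (DB * E + B * DE) =
  (DA - r * DB) * (s * E) + (r * B) * (DC - s * DE).
  rewrite mulrDr opprD addrACA mulrBl mulrBr.
  by congr (_ - _ + (_ - _)); rewrite mulrACA.
rewrite mulrDl -!mulf_div !mulfK //.
Qed.

Lemma fracP (r : Fn F) : exists a b : Pol, b != 0 /\ r = a%:F / b%:F.
Proof. exists (fnum r), (fden r); split; [exact: fden_neq0 | exact: fracE]. Qed.

Lemma dXfracM (r s : Fn F) : dXfrac (r * s) = dXfrac r * s + r * dXfrac s.
Proof.
have [a [b [b0 Hr]]] := fracP r.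
have [c [e [e0 Hs]]] := fracP s.
have Hrs : r * s = (a * c)%:F / (b * e)%:F.
  by rewrite Hr Hs mulf_div (tofracM a c) (tofracM b e).
rewrite (dXfrac_E (mulf_neq0 b0 e0) Hrs).
have -> : dXfrac r = ((dXpol a)%:F - r * (dXpol b)%:F) / b%:F by exact: dXfrac_E.
have -> : dXfrac s = ((dXpol c)%:F - s * (dXpol e)%:F) / e%:F by exact: dXfrac_E.
have B0 : b%:F != 0 :> Fn F by rewrite tofrac_eq0.
have E0 : e%:F != 0 :> Fn F by rewrite tofrac_eq0.
have hA : a%:F = r * b%:F by rewrite Hr (mulfVK B0).
have hC : c%:F = s * e%:F by rewrite Hs (mulfVK E0).
rewrite !dXpolM.
move: (dXpol a) (dXpol b) (dXpol c) (dXpol e) => da db dc de.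
rewrite !tofracD !tofracM hA hC.
rewrite -(leib_aux _ _ _ _ _ _ B0 E0).
reflexivity.
Qed.

Lemma dXfrac0 : dXfrac (0 : Fn F) = 0.
Proof. by apply: (addrI (dXfrac 0)); rewrite -dXfracD !addr0. Qed.

Lemma dXfracN (r : Fn F) : dXfrac (- r) = - dXfrac r.
Proof. by apply: (addrI (dXfrac r)); rewrite -dXfracD !subrr dXfrac0. Qed.

Lemma dXfracB (r s : Fn F) : dXfrac (r - s) = dXfrac r - dXfrac s.
Proof. by rewrite dXfracD dXfracN. Qed.

Lemma dXfrac1 : dXfrac (1 : Fn F) = 0.
Proof. by rewrite -tofrac1 dX_tofrac dXpol1 tofrac0. Qed.

Lemma dXfrac_polyZ (h : {poly F}) : dXfrac (polyZ h) = 0.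
Proof. by rewrite /polyZ dX_tofrac dXpolC tofrac0. Qed.

Lemma dXfrac_zz : dXfrac (zz F) = 0.
Proof. exact: dXfrac_polyZ. Qed.

Lemma dXfrac_ex : dXfrac (ex F) = ex F.
Proof. by rewrite /ex dX_tofrac dXpolX. Qed.

Lemma dXfracV (c : Fn F) : c != 0 -> dXfrac c = 0 -> dXfrac c^-1 = 0.
Proof.
move=> c0 Dc.
have := dXfracM c c^-1; rewrite divff // dXfrac1 Dc mul0r add0r => /esym /eqP.
by rewrite mulf_eq0 (negbTE c0) /= => /eqP.
Qed.

Lemma shfrac0 : shfrac (0 : Fn F) = 0.
Proof. by rewrite -tofrac0 sh_tofrac shpolE rmorph0. Qed.

Lemma shfrac1 : shfrac (1 : Fn F) = 1.
Proof. by rewrite -tofrac1 sh_tofrac shpol1. Qed.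

Lemma shfracV (r : Fn F) : shfrac r^-1 = (shfrac r)^-1.
Proof.
have [a [b [b0 Hr]]] := fracP r.
have [a0|a0] := eqVneq a 0.
  by rewrite Hr a0 tofrac0 mul0r invr0 shfrac0 invr0.
rewrite Hr invf_div !shfrac_frac // invf_div //.
Qed.

Lemma shfrac_polyEx (a : {poly F}) : shfrac (polyEx a) = polyEx a.
Proof.
rewrite /polyEx sh_tofrac shpolE -map_poly_comp; congr (_%:F).
by apply: eq_map_poly => c /=; rewrite /shz comp_polyC.
Qed.

Lemma shfrac_ex : shfrac (ex F) = ex F.
Proof. by rewrite /ex sh_tofrac shpolX. Qed.

Lemma shfrac_zz : shfrac (zz F) = zz F + 1.
Proof.
rewrite /zz sh_tofrac shpolC /shz comp_polyX.
by rewrite polyCD polyC1 tofracD tofrac1.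
Qed.

Lemma dXfrac_sh (r : Fn F) : dXfrac (shfrac r) = shfrac (dXfrac r).
Proof.
have e0 := fden_neq0 r.
rewrite {1}[r]fracE shfrac_frac // dXfrac_frac ?shpol_eq0 //.
rewrite /dXfrac shfrac_frac ?mulf_neq0 //.
by rewrite !dXpol_sh -!shpolM -shpolB.
Qed.

Lemma iterD (f : Fn F -> Fn F) : (forall x y, f (x + y) = f x + f y) ->
  forall n x y, iter n f (x + y) = iter n f x + iter n f y.
Proof. by move=> Hf; elim=> [//|n IH] x y /=; rewrite IH Hf. Qed.

Lemma iter_scal (f : Fn F -> Fn F) (c : Fn F) : (forall x, f (c * x) = c * f x) ->
  forall n x, iter n f (c * x) = c * iter n f x.
Proof. by move=> Hf; elim=> [//|n IH] x /=; rewrite IH Hf. Qed.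

Lemma iter_comm (f g : Fn F -> Fn F) : (forall x, f (g x) = g (f x)) ->
  forall n x, iter n f (g x) = g (iter n f x).
Proof. by move=> Hf; elim=> [//|n IH] x /=; rewrite IH Hf. Qed.

Lemma DxD (r s : Fn F) : Dx (r + s) = Dx r + Dx s.
Proof. by rewrite /Dx dXfracD mulrDr addrACA. Qed.

Lemma Dx0 : Dx (0 : Fn F) = 0.
Proof. by rewrite /Dx dXfrac0 mulr0 addr0. Qed.

Lemma Dx_scal (c r : Fn F) : dXfrac c = 0 -> Dx (c * r) = c * Dx r.
Proof.
move=> Dc; rewrite /Dx dXfracM Dc mul0r add0r.
by rewrite mulrDr [zz F * _]mulrCA.
Qed.

Lemma TzD (r s : Fn F) : Tz (r + s) = Tz r + Tz s.
Proof. by rewrite /Tz shfracD mulrDr. Qed.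

Lemma Tz0 : Tz (0 : Fn F) = 0.
Proof. by rewrite /Tz shfrac0 mulr0. Qed.

Lemma Tz_scal (c r : Fn F) : shfrac c = c -> Tz (c * r) = c * Tz r.
Proof. by move=> Sc; rewrite /Tz shfracM Sc mulrCA. Qed.

Lemma Dx_Tz (r : Fn F) : Dx (Tz r) = Tz (Dx r).
Proof.
rewrite /Dx /Tz dXfracM dXfrac_ex shfracD shfracM shfrac_zz dXfrac_sh.
rewrite mulrDl mul1r !mulrDr [zz F * (_ * _)]mulrCA.
by rewrite addrC [RHS]addrC addrA.
Qed.

Lemma opxD (A : Pol) (r s : Fn F) : opx A (r + s) = opx A r + opx A s.
Proof.
rewrite /opx -big_split; apply: eq_bigr => j _.
by rewrite (iterD DxD) mulrDr.
Qed.

Lemma iter0 (f : Fn F -> Fn F) : f 0 = 0 -> forall n, iter n f 0 = 0.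
Proof. by move=> H; elim=> [//|n IH] /=; rewrite IH H. Qed.

Lemma opx0 (A : Pol) : opx A 0 = 0.
Proof. by rewrite /opx big1 // => j _; rewrite (iter0 Dx0) mulr0. Qed.

Lemma opx_scal (A : Pol) (c r : Fn F) : dXfrac c = 0 -> opx A (c * r) = c * opx A r.
Proof.
move=> Dc; rewrite /opx mulr_sumr; apply: eq_bigr => j _.
by rewrite (iter_scal (fun x => Dx_scal x Dc)) mulrCA.
Qed.

Lemma opzD (B : Pol) (r s : Fn F) : opz B (r + s) = opz B r + opz B s.
Proof.
rewrite /opz -big_split; apply: eq_bigr => j _.
by rewrite (iterD TzD) mulrDr.
Qed.

Lemma opz_scal (B : Pol) (c r : Fn F) : shfrac c = c -> opz B (c * r) = c * opz B r.
Proof.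
move=> Sc; rewrite /opz mulr_sumr; apply: eq_bigr => j _.
by rewrite (iter_scal (fun x => Tz_scal x Sc)) mulrCA.
Qed.

Lemma Tz_sum (I : Type) (s : seq I) (f : I -> Fn F) :
  Tz (\sum_(i <- s) f i) = \sum_(i <- s) Tz (f i).
Proof. exact: (big_morph _ TzD Tz0). Qed.

Lemma opx_sum (A : Pol) (I : Type) (s : seq I) (f : I -> Fn F) :
  opx A (\sum_(i <- s) f i) = \sum_(i <- s) opx A (f i).
Proof. exact: (big_morph _ (opxD A) (opx0 A)). Qed.

Lemma opx_Tz (A : Pol) (r : Fn F) : opx A (Tz r) = Tz (opx A r).
Proof.
rewrite /opx Tz_sum; apply: eq_bigr => j _.
by rewrite (iter_comm Dx_Tz) Tz_scal // shfrac_polyEx.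
Qed.

Lemma opx_opz (A B : Pol) (r : Fn F) : opx A (opz B r) = opz B (opx A r).
Proof.
rewrite /opz opx_sum; apply: eq_bigr => i _.
by rewrite opx_scal ?dXfrac_polyZ // -(iter_comm (fun x => esym (opx_Tz A x))).
Qed.

Lemma polyE (R : nzRingType) (p : {poly R}) :
  p = \sum_(i < size p) (p`_i)%:P * 'X^i.
Proof.
rewrite -{1}[p]coefK poly_def; apply: eq_bigr => i _; by rewrite mul_polyC.
Qed.

Lemma polyZM (a b : {poly F}) : polyZ (a * b) = polyZ a * polyZ b.
Proof. by rewrite /polyZ polyCM tofracM. Qed.

Lemma polyZ1 : polyZ (1 : {poly F}) = 1.
Proof. by rewrite /polyZ polyC1 tofrac1. Qed.

Lemma iterDx1 j : iter j (@Dx F) 1 = polyZ ('X^j).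
Proof.
elim: j => [|j IH] /=; first by rewrite expr0 polyZ1.
by rewrite IH /Dx dXfrac_polyZ add0r exprS polyZM.
Qed.

Lemma iterTz1 i : iter i (@Tz F) 1 = ex F ^+ i.
Proof.
elim: i => [|i IH] /=; first by rewrite expr0.
rewrite IH /Tz /ex -tofracXn sh_tofrac shpolE rmorphXn /= -shpolE shpolX.
by rewrite tofracXn exprS.
Qed.

Lemma opz_one (B : Pol) : opz B 1 = B%:F.
Proof.
rewrite {2}[B]polyE rmorph_sum /opz; apply: eq_bigr => i _.
by rewrite iterTz1 /polyZ /ex rmorphM rmorphXn.
Qed.

Lemma opx_one' (A : Pol) :
  opx A 1 = (\sum_(j < size A) map_poly polyC A`_j * ('X^j)%:P)%:F.
Proof.
rewrite rmorph_sum /opx; apply: eq_bigr => j _.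
by rewrite iterDx1 /polyZ /polyEx rmorphM.
Qed.

Lemma bmap_eq (A : Pol) :
  \sum_(j < size A) map_poly polyC A`_j * ('X^j)%:P = bmap A.
Proof.
rewrite /bmap; apply: eq_bigr => j _.
rewrite {1}[A`_j]polyE rmorph_sum /= mulr_suml; apply: eq_bigr => i _.
rewrite rmorphM /= map_polyC map_polyXn /= mulrAC; congr (_ * _).
by rewrite -mul_polyC polyCM.
Qed.

Lemma opx_opz_one (A : Pol) : opx A 1 = opz (bmap A) 1.
Proof. by rewrite opz_one opx_one' bmap_eq. Qed.

Lemma SY_gt0 (p : Pol) : p != 0 -> (0 < SY p)%N.
Proof. by move=> p0; rewrite lt0n SY_eq0. Qed.

Lemma SY_mulS (p q : Pol) : p != 0 -> q != 0 -> (SY (p * q)).+1 = (SY p + SY q)%N.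
Proof.
move=> p0 q0; rewrite SY_mul // prednK // addn_gt0 (SY_gt0 p0).
done.
Qed.

Lemma SY_mul_lt (p q : Pol) : q != 0 -> (SY (p * q) < SY p + SY q)%N.
Proof.
move=> q0; apply: (leq_ltn_trans (SY_mul_leq p q)).
by rewrite ltn_predL addn_gt0 (SY_gt0 q0) orbT.
Qed.

Definition HD (r : Fn F) (p q : nat) := exists a b : Pol,
  [/\ a != 0, b != 0, r = a%:F / b%:F & (SY a + q = SY b + p)%N].
Definition LD (r : Fn F) (p q : nat) := r = 0 \/ exists a b : Pol,
  [/\ a != 0, b != 0, r = a%:F / b%:F & (SY a + q <= SY b + p)%N].

Lemma HD_neq0 r p q : HD r p q -> r != 0.
Proof.
case=> a [b [a0 b0 -> _]].
by rewrite mulf_neq0 ?invr_neq0 ?tofrac_eq0.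
Qed.

Lemma HD_LD r p q : HD r p q -> LD r p q.
Proof. case=> a [b [a0 b0 E H]]; right; exists a, b; split => //; by rewrite H. Qed.

Lemma LD_mono r p p' q : LD r p q -> (p <= p')%N -> LD r p' q.
Proof.
case=> [->|[a [b [a0 b0 E H]]]] le; first by left.
right; exists a, b; split => //; tolia.
Qed.

Lemma LD0 p q : LD 0 p q.
Proof. by left. Qed.

Lemma addfrac (a b c e : Pol) : b != 0 -> e != 0 ->
  a%:F / b%:F + c%:F / e%:F = (a * e + c * b)%:F / (b * e)%:F :> Fn F.
Proof.
move=> b0 e0; rewrite addf_div ?tofrac_eq0 //.
by rewrite tofracD !tofracM.
Qed.

Lemma mulfrac (a b c e : Pol) :
  a%:F / b%:F * (c%:F / e%:F) = (a * c)%:F / (b * e)%:F :> Fn F.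
Proof. by rewrite mulf_div !tofracM. Qed.

Lemma LD_add r s p q : LD r p q -> LD s p q -> LD (r + s) p q.
Proof.
case=> [->|[a [b [a0 b0 Er Hr]]]]; first by rewrite add0r.
case=> [->|[c [e [c0 e0 Es Hs]]]]; first by rewrite addr0; right; exists a, b.
rewrite Er Es addfrac //.
have [N0|N0] := eqVneq (a * e + c * b) 0.
  by left; rewrite N0 tofrac0 mul0r.
right; exists (a * e + c * b), (b * e); split; rewrite ?mulf_neq0 //.
have := SY_add (a * e) (c * b); rewrite leq_max.
have := SY_mulS a0 e0; have := SY_mulS c0 b0; have := SY_mulS b0 e0.
move: Hr Hs; move: (SY a) (SY b) (SY c) (SY e) (SY (a * e)) (SY (c * b)) (SY (b * e))
  (SY (a * e + c * b)) => xa xb xc xe xae xcb xbe xN.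
move=> Hr Hs H1 H2 H3 /orP [] H4; tolia.
Qed.

Lemma HD_add r s p q : HD r p.+1 q -> LD s p q -> HD (r + s) p.+1 q.
Proof.
move=> [a [b [a0 b0 Er Hr]]].
case=> [->|[c [e [c0 e0 Es Hs]]]]; first by rewrite addr0; exists a, b.
rewrite Er Es addfrac //.
have Hlt : (SY (c * b) < SY (a * e))%N.
  have := SY_mulS a0 e0; have := SY_mulS c0 b0.
  move: Hr Hs; move: (SY a) (SY b) (SY c) (SY e) (SY (a * e)) (SY (c * b)) => xa xb xc xe xae xcb.
  move=> Hr Hs H1 H2; tolia.
have HN := SY_addl Hlt.
have N0 : a * e + c * b != 0.
  by rewrite -SY_eq0 HN SY_eq0 mulf_neq0.
exists (a * e + c * b), (b * e); split; rewrite ?mulf_neq0 //.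
rewrite HN.
have := SY_mulS a0 e0; have := SY_mulS b0 e0.
move: Hr; move: (SY a) (SY b) (SY e) (SY (a * e)) (SY (b * e)) => xa xb xe xae xbe.
move=> Hr H1 H2; tolia.
Qed.

Lemma HD_mul c r p1 q1 p q : HD c p1 q1 -> HD r p q -> HD (c * r) (p1 + p) (q1 + q).
Proof.
move=> [a [b [a0 b0 Ec Hc]]] [a' [b' [a0' b0' Er Hr]]].
exists (a * a'), (b * b'); split; rewrite ?mulf_neq0 // ?Ec ?Er ?mulfrac //.
have := SY_mulS a0 a0'; have := SY_mulS b0 b0'.
move: Hc Hr; move: (SY a) (SY b) (SY a') (SY b') (SY (a * a')) (SY (b * b')) => x1 x2 x3 x4 x5 x6.
move=> H1 H2 H3 H4; tolia.
Qed.

Lemma LD_mul c r p1 q1 p q : HD c p1 q1 -> LD r p q -> LD (c * r) (p1 + p) (q1 + q).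
Proof.
move=> [a [b [a0 b0 Ec Hc]]]; case=> [->|[a' [b' [a0' b0' Er Hr]]]].
  by left; rewrite mulr0.
right; exists (a * a'), (b * b'); split; rewrite ?mulf_neq0 // ?Ec ?Er ?mulfrac //.
have := SY_mulS a0 a0'; have := SY_mulS b0 b0'.
move: Hc Hr; move: (SY a) (SY b) (SY a') (SY b') (SY (a * a')) (SY (b * b')) => x1 x2 x3 x4 x5 x6.
move=> H1 H2 H3 H4; tolia.
Qed.

Lemma SY1 : SY (1 : Pol) = 1%N.
Proof. by rewrite -polyC1 SY_C size_poly1. Qed.

Lemma HD_zz : HD (zz F) 1 0.
Proof.
exists ((('X : {poly F})%:P)), 1; split.
- by rewrite polyC_eq0 polyX_eq0.
- exact: oner_neq0.
- by rewrite tofrac1 divr1.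
by rewrite SY_C size_polyX SY1.
Qed.

Lemma HD_polyEx (a : {poly F}) : a != 0 -> HD (polyEx a) 0 0.
Proof.
move=> a0; exists (map_poly polyC a), 1; split.
- by rewrite -SY_eq0 SY_mapC.
- exact: oner_neq0.
- by rewrite tofrac1 divr1.
by rewrite SY_mapC // SY1.
Qed.

Lemma LD_dX r p q : LD r p q -> LD (dXfrac r) p q.
Proof.
case=> [->|[a [b [a0 b0 Er Hr]]]]; first by rewrite dXfrac0; left.
rewrite Er dXfrac_frac //.
have [N0|N0] := eqVneq (dXpol a * b - a * dXpol b) 0.
  by left; rewrite N0 tofrac0 mul0r.
right; exists (dXpol a * b - a * dXpol b), (b * b); split; rewrite ?mulf_neq0 //.
have := SY_add (dXpol a * b) (- (a * dXpol b)); rewrite SY_opp leq_max.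
have := SY_mul_lt (dXpol a) b0; have := SY_mul_lt (dXpol b) a0.
rewrite [dXpol b * a]mulrC.
have := SY_dX a; have := SY_dX b; have := SY_mulS b0 b0.
move: Hr; move: (SY a) (SY b) (SY (dXpol a)) (SY (dXpol b)) (SY (b * b))
  (SY (dXpol a * b)) (SY (a * dXpol b)) (SY (dXpol a * b - a * dXpol b)) => x1 x2 x3 x4 x5 x6 x7 x8.
move=> H1 H2 H3 H4 H5 H6 /orP [] H7; tolia.
Qed.

Lemma HD_Dx r p q : HD r p q -> HD (Dx r) p.+1 q.
Proof.
move=> H; rewrite /Dx addrC.
apply: HD_add; first exact: (HD_mul HD_zz H).
by apply: LD_dX; apply: HD_LD.
Qed.

Lemma LD_Dx r p q : LD r p q -> LD (Dx r) p.+1 q.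
Proof.
move=> H; rewrite /Dx; apply: LD_add.
  by apply: (LD_mono (LD_dX H)).
exact: (LD_mul HD_zz H).
Qed.

Lemma HD_iter r p q j : HD r p q -> HD (iter j (@Dx F) r) (p + j) q.
Proof.
move=> H; elim: j => [|j IH] /=; first by rewrite addn0.
by rewrite addnS; apply: HD_Dx.
Qed.

Lemma LD_iter r p q j : LD r p q -> LD (iter j (@Dx F) r) (p + j) q.
Proof.
move=> H; elim: j => [|j IH] /=; first by rewrite addn0.
by rewrite addnS; apply: LD_Dx.
Qed.

Lemma HD_fnum (r : Fn F) : r != 0 -> exists p q, HD r p.+1 q.
Proof.
move=> r0; exists (SY (fnum r)), (SY (fden r)).+1, (fnum r), (fden r); split.
- apply: contraNneq r0 => n0; by rewrite [r]fracE n0 tofrac0 mul0r.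
- exact: fden_neq0.
- exact: fracE.
by rewrite !addnS addnC.
Qed.

Lemma polyEx0 : polyEx (0 : {poly F}) = 0.
Proof. by rewrite /polyEx map_poly0 tofrac0. Qed.

Lemma opx_inj (A : Pol) (r : Fn F) : lead_coef A != 0 -> opx A r = 0 -> r = 0.
Proof.
move=> lA; apply: contra_eq => r0.
have [p [q Hr]] := HD_fnum r0.
have A0 : A != 0 by rewrite -lead_coef_eq0.
have [m Hm] : exists m, size A = m.+1.
  by exists (size A).-1; rewrite prednK // size_poly_gt0.
rewrite /opx Hm big_ord_recr /= addrC.
have lA' : A`_m != 0 by move: lA; rewrite lead_coefE Hm.
have HT := HD_mul (HD_polyEx lA') (HD_iter m Hr).
rewrite add0n add0n addSn in HT.
apply: (HD_neq0 (HD_add HT _)).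
apply: (big_ind (fun x => LD x (p + m) q)); [exact: LD0 | by move=> x y; apply: LD_add | ].
move=> i _.
have [a0|a0] := eqVneq A`_i 0.
  by rewrite a0 polyEx0 mul0r; exact: LD0.
have H1 := LD_mul (HD_polyEx a0) (HD_LD (HD_iter i Hr)).
rewrite add0n add0n in H1.
by apply: (LD_mono H1); rewrite addSn -addnS leq_add2l.
Qed.

Lemma opxN (A : Pol) (r : Fn F) : opx A (- r) = - opx A r.
Proof.
have D1 : dXfrac (-1 : Fn F) = 0 by rewrite dXfracN dXfrac1 oppr0.
by rewrite -mulN1r (opx_scal _ _ D1) mulN1r.
Qed.

Lemma opxB (A : Pol) (r s : Fn F) : opx A (r - s) = opx A r - opx A s.
Proof. by rewrite opxD opxN. Qed.

Lemma polyZ_neq0 (h : {poly F}) : h != 0 -> polyZ h != 0.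
Proof. by move=> h0; rewrite /polyZ tofrac_eq0 polyC_eq0. Qed.

Lemma polyEx_neq0 (a : {poly F}) : a != 0 -> polyEx a != 0.
Proof. by move=> a0; rewrite /polyEx tofrac_eq0 -SY_eq0 SY_mapC. Qed.

Lemma dXfrac_polyZV (h : {poly F}) : h != 0 -> dXfrac (polyZ h)^-1 = 0.
Proof. by move=> h0; rewrite dXfracV ?polyZ_neq0 ?dXfrac_polyZ. Qed.

Lemma shfrac_polyExV (a : {poly F}) : shfrac (polyEx a)^-1 = (polyEx a)^-1.
Proof. by rewrite shfracV shfrac_polyEx. Qed.

End A.

Unset Implicit Arguments.

Theorem proposition4p1 (F : numClosedFieldType)
  (f g theta nu : {poly F}) (Pbar Qbar : {poly {poly F}}) (psi : Fn F) :
  f \is monic -> g \is monic ->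
  theta != 0 -> nu != 0 ->
  lead_coef Pbar = theta -> lead_coef Qbar = nu ->
  size Pbar = size f ->
  psi = (polyZ f)^-1 * opP theta Pbar 1 ->
  1 = (polyZ g)^-1 * opQ Qbar nu psi ->
  [/\ psi = (polyEx theta)^-1 * ((polyZ f)^-1 * opz (bmap Pbar) 1),
      1 = (polyEx nu)^-1 * opz (bmap Qbar) ((polyZ g)^-1 * psi),
      (polyZ f)^-1 * opz (bmap Pbar) (opz (bmap Qbar) ((polyZ g)^-1 * psi))
        = polyEx theta * polyEx nu * psi
    & opP theta Pbar (opQ Qbar nu psi) = polyZ f * polyZ g * psi].
Proof.
move=> fm gm th0 nu0 lP lQ sP Hpsi H1.
have f0 : f != 0 by exact: monic_neq0.
have g0 : g != 0 by exact: monic_neq0.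
have Zf0 := polyZ_neq0 f0.
have Zg0 := polyZ_neq0 g0.
have Et0 := polyEx_neq0 th0.
have En0 := polyEx_neq0 nu0.
have HQ : opQ Qbar nu psi = polyZ g by rewrite -(mulVKf Zg0 (opQ Qbar nu psi)) -H1 mulr1.
have HP : opx Pbar 1 = polyEx theta * (polyZ f * psi).
  by rewrite Hpsi /opP (mulVKf Zf0) (mulVKf Et0).
have HQ' : opx Qbar ((polyEx nu)^-1 * psi) = polyZ g := HQ.
have lQ0 : lead_coef Qbar != 0 by rewrite lQ.
have Hchi : (polyEx nu)^-1 * opz (bmap Qbar) ((polyZ g)^-1 * psi) = 1.
  apply/eqP; rewrite -subr_eq0 -(mulVf En0); apply/eqP.
  apply: (opx_inj lQ0); rewrite opxB.
  rewrite -(opz_scal _ _ (shfrac_polyExV nu)) opx_opz mulrCA.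
  rewrite (opx_scal _ _ (dXfrac_polyZV g0)) HQ' (mulVf Zg0).
  by rewrite (mulVf En0) -opx_opz_one subrr.
have Hchi' : opz (bmap Qbar) ((polyZ g)^-1 * psi) = polyEx nu.
  by rewrite -[LHS](mulVKf En0) Hchi mulr1.
split.
- by rewrite Hpsi /opP opx_opz_one mulrCA.
- by rewrite Hchi.
- rewrite Hchi' -[polyEx nu]mulr1 (opz_scal _ _ (shfrac_polyEx nu)) -opx_opz_one HP.
  rewrite mulr1 [polyEx nu * _]mulrCA [polyEx nu * (polyZ f * _)]mulrCA mulrCA.
  by rewrite (mulKf Zf0) mulrA.
rewrite HQ /opP -[polyZ g]mulr1 (opx_scal _ _ (dXfrac_polyZ g)) HP.
by rewrite mulr1 [polyZ g * _]mulrCA (mulKf Et0) mulrCA mulrA.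
Qed.
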